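(* For real $u,w$ and an integer $n\ge1$ let $g_n(u,w):=\sum_{i=1}^n i\,w^{i-1}u^{n-i}$. Then for every odd integer $n\ge 5$, $$g_n(u,w)=(u^{n-1}+w^{n-1})+\sum_{i=1}^{(n-3)/2}u^{2i}w^{n-1-2i}+(u+w)\sum_{i=0}^{(n-3)/2}(n-1-2i)u^{2i}w^{n-2-2i}.$$ Furthermore, let $\beta>0$, $k>0$, and $w=\delta(u)$ with $\delta$ the involution defined in the context. Then for all odd integers $n\ge 3$: (i) if $-k<u_0<0$, then $g_n(u,w)>0$ for all $u\in(0,u_1)$; (ii) if $u_0<-k$, then $g_n(w,u)>0$ for all $u\in(0,k)$.
   Context: $\Phi(u)=\beta\left(-\frac{u^4}{4}+\frac{k+u_0}{3}u^3-\frac{ku_0}{2}u^2\right)$. Case $-k<u_0<0$: $u_1$ is the unique point of $(0,k)$ with $\Phi(u_1)=\Phi(u_0)$, and for $u\in(0,u_1)$, $\delta(u)$ is the unique $w\in(u_0,0)$ with $\Phi(w)=\Phi(u)$. Case $u_0<-k$: $w_2$ is the unique point of $(u_0,0)$ with $\Phi(w_2)=\Phi(k)$, and for $u\in(0,k)$, $\delta(u)$ is the unique $w\in(w_2,0)$ with $\Phi(w)=\Phi(u)$. *)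

(* Defs.v *)
From HB Require Import structures.
From mathcomp Require Import all_boot all_order all_algebra.
From mathcomp Require Import reals.
Set Implicit Arguments. Unset Strict Implicit. Unset Printing Implicit Defensive.
Import Order.TTheory GRing.Theory Num.Theory.
Local Open Scope ring_scope.

Definition gfun (R : realType) (n : nat) (u w : R) : R :=
  \sum_(1 <= i < n.+1) i%:R * w ^+ i.-1 * u ^+ (n - i).

Definition Phi (R : realType) (beta k u0 u : R) : R :=
  beta * (- u ^+ 4 / 4%:R + (k + u0) / 3%:R * u ^+ 3 - k * u0 / 2%:R * u ^+ 2).

(* Main.v *)
Require Import Defs.
From HB Require Import structures.
From mathcomp Require Import all_boot all_order all_algebra.
From mathcomp Require Import reals.
From mathcomp Require Import zify ring lra.
Import Order.TTheory GRing.Theory Num.Theory.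
Local Open Scope ring_scope.

Lemma gfunS (R : realType) (n : nat) (u w : R) :
  gfun n.+1 u w = u * gfun n u w + n.+1%:R * w ^+ n.
Proof.
rewrite /gfun big_nat_recr //= subnn expr0 mulr1 big_distrr /=; congr (_ + _).
apply: eq_big_nat => i /andP [_ hi].
rewrite subSn // exprS; ring.
Qed.

Lemma gfun0 (R : realType) (u w : R) : gfun 0 u w = 0.
Proof. by rewrite /gfun big_geq. Qed.

Lemma gfun_closed (R : realType) (n : nat) (u w : R) :
  (w - u) ^+ 2 * gfun n u w = n%:R * w ^+ n.+1 - n.+1%:R * w ^+ n * u + u ^+ n.+1.
Proof.
elim: n => [|n IH]; first by rewrite gfun0 expr0 expr1; ring.
rewrite gfunS mulrDr mulrCA IH.
rewrite !exprS -!natr1 ; ring.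
Qed.

Lemma gfun_pos (R : realType) (n : nat) (u w : R) :
  odd n -> u * w < 0 -> 0 < gfun n u w.
Proof.
move=> hn huw.
have hu : u != 0 by apply/eqP => h; move: huw; rewrite h mul0r ltxx.
have hw : w != 0 by apply/eqP => h; move: huw; rewrite h mulr0 ltxx.
have hwu : w - u != 0.
  by apply/eqP => h; move: huw; rewrite (subr0_eq h) -expr2 exprn_even_lt0.
have hsq : 0 < (w - u) ^+ 2 by rewrite exprn_even_gt0 // hwu orbT.
rewrite -(pmulr_rgt0 _ hsq) gfun_closed.
have h1 : 0 < w ^+ n.+1 by rewrite exprn_even_gt0 /= ?hn // hw orbT.
have h2 : 0 < u ^+ n.+1 by rewrite exprn_even_gt0 /= ?hn // hu orbT.
have h3 : w ^+ n * u < 0.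
  case: n hn h1 h2 => [//|n] hn _ _.
  rewrite exprS (_ : w * w ^+ n * u = (u * w) * w ^+ n); last by ring.
  rewrite pmulr_llt0 //.
  by rewrite exprn_even_gt0 // hw orbT.
have h4 : 0 <= n%:R * w ^+ n.+1 :> R by rewrite mulr_ge0 // ltW.
have h5 : 0 < n.+1%:R :> R by rewrite ltr0n.
have h6 : 0 < - (n.+1%:R * (w ^+ n * u)) by rewrite oppr_gt0 pmulr_rlt0.
rewrite -mulrA; lra.
Qed.

Lemma ident (R : realType) (m : nat) (u w : R) :
  gfun (m.*2 + 3) u w =
       (u ^+ (m.*2 + 3).-1 + w ^+ (m.*2 + 3).-1)
       + \sum_(1 <= i < m.+1) u ^+ (2 * i) * w ^+ ((m.*2 + 3) - 1 - 2 * i)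
       + (u + w) * \sum_(0 <= i < m.+1)
                    ((m.*2 + 3) - 1 - 2 * i)%:R * u ^+ (2 * i) * w ^+ ((m.*2 + 3) - 2 - 2 * i).
Proof.
elim: m => [|m IH].
  rewrite (_ : (0.*2+3 = 3)%N) // !gfunS gfun0 big_geq // big_nat1 /=.
  rewrite (_ : (3-1-2*0)%N = 2) // (_ : (3-2-2*0)%N = 1) // muln0; ring.
rewrite (_ : (m.+1.*2 + 3 = (m.*2 + 3).+2)%N); last by lia.
rewrite !gfunS IH.
rewrite (big_nat_recl _ _ _ (leq0n m.+1)).
rewrite (@big_nat_recl _ _ _ m.+1 1) //.
set n := (m.*2 + 3)%N.
have e1 : forall i, (n.+2 - 1 - 2 * i.+1 = n - 1 - 2 * i)%N by move=> i; lia.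
have e2 : forall i, (n.+2 - 2 - 2 * i.+1 = n - 2 - 2 * i)%N by move=> i; lia.
have SB : \sum_(1<=i<m.+1) u^+(2*i.+1) * w^+(n.+2-1-2*i.+1) = u^+2 * \sum_(1<=i<m.+1) u^+(2*i)*w^+(n-1-2*i).
  rewrite big_distrr; apply: eq_bigr => i _; rewrite e1 mulnS exprD /=; ring.
have SC : \sum_(0<=i<m.+1) (n.+2-1-2*i.+1)%:R * u^+(2*i.+1) * w^+(n.+2-2-2*i.+1) = u^+2 * \sum_(0<=i<m.+1) (n-1-2*i)%:R * u^+(2*i) * w^+(n-2-2*i).
  by rewrite big_distrr; apply: eq_bigr => i _; rewrite e1 e2 mulnS exprD /=; ring.
rewrite SB SC.
set S1 := \sum_(1 <= i < m.+1) _.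
set S2 := \sum_(0 <= i < m.+1) _.
have hn : (3 <= n)%N by rewrite /n; lia.
clearbody n S1 S2.
have [a ha] : exists a, n = a.+1 by exists n.-1; lia.
subst n.
rewrite (_ : (a.+3 - 1 - 2 * 1 = a)%N); last by lia.
rewrite (_ : (a.+3 - 1 - 2 * 0 = a.+2)%N); last by lia.
rewrite (_ : (a.+3 - 2 - 2 * 0 = a.+1)%N); last by lia.
rewrite /= !muln0 expr0 !exprS.
ring.
Qed.

Theorem lemma3p8 (R : realType) :
  (* the identity, for odd n >= 5 *)
  (forall (n : nat) (u w : R), odd n -> (5 <= n)%N ->
     gfun n u w =
       (u ^+ n.-1 + w ^+ n.-1)
       + \sum_(1 <= i < ((n - 3)./2).+1) u ^+ (2 * i) * w ^+ (n - 1 - 2 * i)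
       + (u + w) * \sum_(0 <= i < ((n - 3)./2).+1)
                    (n - 1 - 2 * i)%:R * u ^+ (2 * i) * w ^+ (n - 2 - 2 * i))
  /\
  (forall (beta k u0 : R), 0 < beta -> 0 < k ->
     (- k < u0 -> u0 < 0 ->
        forall u1 : R, 0 < u1 -> u1 < k -> Phi beta k u0 u1 = Phi beta k u0 u0 ->
        forall (n : nat) (u w : R), odd n -> (3 <= n)%N ->
          0 < u -> u < u1 ->
          u0 < w -> w < 0 -> Phi beta k u0 w = Phi beta k u0 u ->
          0 < gfun n u w)
     /\
     (u0 < - k ->
        forall w2 : R, u0 < w2 -> w2 < 0 -> Phi beta k u0 w2 = Phi beta k u0 k ->
        forall (n : nat) (u w : R), odd n -> (3 <= n)%N ->
          0 < u -> u < k ->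
          w2 < w -> w < 0 -> Phi beta k u0 w = Phi beta k u0 u ->
          0 < gfun n w u)).
Proof.
split.
  move=> n u w hodd h5.
  have [m hm] : exists m, n = (m.*2 + 3)%N.
    have e := odd_double_half n; rewrite hodd /= in e.
    move: (n./2) e => h e; exists h.-1; rewrite -!mul2n in e *; lia.
  subst n.
  rewrite (_ : ((m.*2 + 3 - 3)./2 = m)%N); first exact: ident.
  by rewrite addnK doubleK.
move=> beta k u0 hb hk; split.
  move=> _ _ u1 _ _ _ n u w hodd _ hu _ _ hw _.
  by apply: gfun_pos => //; rewrite pmulr_rlt0.
move=> _ w2 _ _ _ n u w hodd _ hu _ _ hw _.
by apply: gfun_pos => //; rewrite nmulr_rlt0.
Qed.
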